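(* Let $(A_n)_{n\in\mathbb Z^+}$ be a sequence of invertible linear operators on $\mathbb R^d$ that admits a strong exponential dichotomy with respect to a sequence of norms $\|\cdot\|_n$, $n\in\mathbb Z^+$, and projections $P_n$, $n\in\mathbb Z^+$. Let $(P_n')_{n\in\mathbb Z^+}$ be projections on $\mathbb R^d$ with $P'_{n+1}A_n=A_nP'_n$ for all $n\in\mathbb Z^+$. Then $(A_n)_{n\in\mathbb Z^+}$ admits a strong exponential dichotomy with respect to the norms $\|\cdot\|_n$ and projections $P'_n$ if and only if $\operatorname{Im}P_0=\operatorname{Im}P_0'$.
   Context: $\mathbb Z^+=\{0,1,\dots\}$. $\mathcal A(m,n)=A_{m-1}\cdots A_n$ ($m>n$), $\mathrm{Id}$ ($m=n$), $A_m^{-1}\cdots A_{n-1}^{-1}$ ($m<n$). Strong exponential dichotomy w.r.t. norms $\{\|\cdot\|_n\}$ and projections $P_n$: $A_nP_n=P_{n+1}A_n$ for all $n$, and there exist $K>0$, $a\ge\lambda>0$ with, for $m\ge n$, $x\in\mathbb R^d$, $Q_m=\mathrm{Id}-P_m$: $\|\mathcal A(m,n)P_nx\|_m\le Ke^{-\lambda(m-n)}\|x\|_n$, $\|\mathcal A(n,m)Q_mx\|_n\le Ke^{-\lambda(m-n)}\|x\|_m$, $\|\mathcal A(m,n)x\|_m\le Ke^{a(m-n)}\|x\|_n$, $\|\mathcal A(n,m)x\|_n\le Ke^{a(m-n)}\|x\|_m$. *)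

(* Defs.v *)
From HB Require Import structures.
From mathcomp Require Import all_boot all_order all_algebra.
From mathcomp Require Import classical_sets reals.
From mathcomp.analysis Require Import sequences exp.
Set Implicit Arguments. Unset Strict Implicit. Unset Printing Implicit Defensive.
Import Order.TTheory GRing.Theory Num.Theory.
Local Open Scope ring_scope.
Local Open Scope classical_set_scope.

Section Defs.
Variables (R : realType) (d : nat).

Definition is_norm (N : 'cV[R]_d -> R) : Prop :=
  [/\ forall x, 0 <= N x,
      forall x, N x = 0 -> x = 0,
      forall (c : R) x, N (c *: x) = `|c| * N x
    & forall x y, N (x + y) <= N x + N y].

Definition is_proj (P : 'M[R]_d) : Prop := P *m P = P.

Fixpoint fwd (A : nat -> 'M[R]_d) (n k : nat) : 'M[R]_d :=
  match k with
  | 0 => 1%:M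
  | k'.+1 => A (n + k')%N *m fwd A n k'
  end.

(* the cocycle  A(m,n) = A_{m-1}...A_n (m > n), Id (m = n),
   A_m^{-1} ... A_{n-1}^{-1} = (A_{n-1}...A_m)^{-1} (m < n) *)
Definition cocycle (A : nat -> 'M[R]_d) (m n : nat) : 'M[R]_d :=
  if (n <= m)%N then fwd A n (m - n) else invmx (fwd A m (n - m)).

Definition strong_exp_dichotomy (A : nat -> 'M[R]_d)
    (N : nat -> 'cV[R]_d -> R) (P : nat -> 'M[R]_d) : Prop :=
  (forall n, is_proj (P n)) /\
  (forall n, A n *m P n = P n.+1 *m A n) /\
  exists K lam a : R, [/\ 0 < K, 0 < lam, lam <= a &
    forall m n : nat, (n <= m)%N -> forall x : 'cV[R]_d,
      [/\ N m (cocycle A m n *m (P n *m x))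
            <= K * expR (- lam * (m - n)%:R) * N n x,
          N n (cocycle A n m *m ((1%:M - P m) *m x))
            <= K * expR (- lam * (m - n)%:R) * N m x,
          N m (cocycle A m n *m x) <= K * expR (a * (m - n)%:R) * N n x
        & N n (cocycle A n m *m x) <= K * expR (a * (m - n)%:R) * N m x]].

Definition opIm (P : 'M[R]_d) : set 'cV[R]_d := [set y | exists x, y = P *m x].

End Defs.

(* Main.v *)
Require Import Defs.
From HB Require Import structures.
From mathcomp Require Import all_boot all_order all_algebra.
From mathcomp Require Import all_classical all_reals all_analysis.
Import Order.TTheory GRing.Theory Num.Theory Num.Def.
Import numFieldTopology.Exports numFieldNormedType.Exports.
Local Open Scope ring_scope.

Lemma entry_le_norm {R : realType} {m n} (M : 'M[R]_(m, n)) i j :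
  `|M i j| <= `|M|.
Proof.
rewrite [leRHS]/normr /= mx_normrE; apply/bigmax_geP; right => /=.
by exists (i, j).
Qed.

Section NormFacts.
Lemma norm0 {R : realType} {d} {N : 'cV[R]_d -> R} : is_norm N -> N 0 = 0.
Proof.
case=> _ _ Hs _; have := Hs 0 0; rewrite scale0r normr0 mul0r; exact.
Qed.

Lemma normN {R : realType} {d} {N : 'cV[R]_d -> R} x : is_norm N -> N (- x) = N x.
Proof.
case=> _ _ Hs _; rewrite -scaleN1r Hs normrN normr1 mul1r //.
Qed.

Lemma normB {R : realType} {d} {N : 'cV[R]_d -> R} x y : is_norm N ->
  N (x - y) <= N x + N y.
Proof.
move=> hN; case: (hN) => _ _ _ Ht; by rewrite -(normN y hN) Ht.
Qed.

Lemma norm_sum {R : realType} {d} {N : 'cV[R]_d -> R} n (f : 'I_n -> 'cV[R]_d) :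
  is_norm N -> N (\sum_(j < n) f j) <= \sum_(j < n) N (f j).
Proof.
move=> hN; case: (hN) => _ _ _ Ht.
apply: (big_ind2 (fun a b => N a <= b)); first by rewrite (norm0 hN).
  by move=> x1 x2 y1 y2 h1 h2; apply: le_trans (Ht _ _) _; apply: lerD.
by [].
Qed.
End NormFacts.

Lemma mul_col_dec (R : realType) d (T : 'M[R]_d) (y : 'cV[R]_d) :
  T *m y = \sum_(j < d) y j 0 *: col j T.
Proof.
apply/matrixP => i k; rewrite !mxE summxE; apply: eq_bigr => j _.
by rewrite !mxE (ord1 k) mulrC.
Qed.

Lemma norm_upper {R : realType} {d} {N : 'cV[R]_d -> R} (T : 'M[R]_d) (y : 'cV[R]_d) (M : R) :
  is_norm N -> (forall j, `|y j 0| <= M) ->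
  N (T *m y) <= (\sum_(j < d) N (col j T)) * M.
Proof.
move=> hN hy; case: (hN) => Hp _ Hs _.
rewrite mul_col_dec; apply: le_trans (norm_sum _ _ hN) _.
rewrite mulr_suml; apply: ler_sum => j _; rewrite Hs mulrC.
by apply: ler_wpM2l => //.
Qed.

Lemma norm_lower (R : realType) d (N : 'cV[R]_d -> R) : is_norm N ->
  exists m : R, 0 < m /\ forall (y : 'cV[R]_d) j, m * `|y j 0| <= N y.
Proof.
move=> hN; case: (hN) => Hp Hz Hs Ht.
case: d N hN Hp Hz Hs Ht => [|d] N hN Hp Hz Hs Ht.
  by exists 1; split => // y [].
set B := \sum_(j < d.+1) N (col j 1%:M).
have HB : forall x : 'cV[R]_d.+1, N x <= B * `|x^T|.
  move=> x; have := norm_upper 1%:M x `|x^T| hN; rewrite mul1mx; apply => j.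
  by have := entry_le_norm x^T 0 j; rewrite mxE.
have Hl : forall x y, `|N x - N y| <= N (x - y).
  move=> x y; rewrite ler_norml; apply/andP; split.
    rewrite lerNl opprB lerBlDr; have := Ht (y - x) x; rewrite subrK -opprB normN //.
  rewrite lerBlDr; have := Ht (x - y) y; rewrite subrK //.
set f := fun v : 'rV[R]_d.+1 => N v^T.
have fc : continuous f.
  move=> v; apply/(@cvgrPdist_lt _ _ _ (nbhs v) (nbhs_filter v)) => e e0.
  have B1 : 0 < B + 1 by rewrite ltr_pwDr // sumr_ge0.
  have eB : 0 < e / (B + 1) by rewrite divr_gt0.
  near=> w.
  have : `|f v - f w| <= B * `|v - w|.
    apply: le_trans (Hl _ _) _; rewrite -linearB /=.
    by apply: le_trans (HB _) _; rewrite trmxK.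
  move/le_lt_trans; apply.
  have : `|v - w| < e / (B + 1).
    near: w. exact: (@cvgr_dist_lt _ _ _ (nbhs v) _ id v cvg_id _ eB).
  rewrite ltr_pdivlMr // => h; apply: le_lt_trans h.
  by rewrite mulrC; apply: ler_wpM2l => //; rewrite lerDl.
set S := [set v : 'rV[R]_d.+1 | `|v| = 1]%classic.
have S0 : (S !=set0)%classic.
  set v0 : 'rV[R]_d.+1 := const_mx 1.
  have v00 : `|v0| != 0.
    rewrite normr_eq0; apply/eqP => /matrixP /(_ 0 0); rewrite !mxE => /eqP.
    by rewrite oner_eq0.
  exists (`|v0|^-1 *: v0); rewrite /S /= normrZ ger0_norm ?invr_ge0 //.
  by rewrite mulVf.
have Sc : compact S.
  apply: bounded_closed_compact.
    exists 1; split => // r r1 v Sv; rewrite /= Sv; exact: ltW.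
  have -> : S = (normr @^-1` [set x | x = 1])%classic by [].
  apply: preimage_closed; last exact: closed_eq.
  by move=> x _; exact: norm_continuous.
have [c cS cmin] := compact_EVT_min S0 Sc (continuous_subspaceT fc).
have cS' : `|c| = 1 by move: cS; rewrite inE.
exists (f c); split.
  rewrite lt_neqAle Hp andbT; apply/negP => /eqP /esym /Hz /eqP.
  rewrite -(inj_eq (@trmx_inj _ _ _)) trmxK trmx0 => /eqP c0.
  by move: cS'; rewrite c0 normr0 => /eqP; rewrite eq_sym oner_eq0.
move=> y j.
have [->|y0] := eqVneq y 0.
  by rewrite mxE normr0 mulr0 Hp.
set r := `|y^T|.
have r0 : 0 < r.
  rewrite normr_gt0; apply: contra y0 => /eqP.
  by rewrite -(inj_eq (@trmx_inj _ _ _)) trmx0 => ->.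
have ri : 0 <= r^-1 by rewrite invr_ge0 ltW.
have : f c <= f (r^-1 *: y^T) by apply: cmin; rewrite inE /S /= normrZ (ger0_norm ri) mulVf // gt_eqF.
rewrite /f linearZ /= trmxK Hs (ger0_norm ri) mulrC ler_pdivlMr // => h.
apply: le_trans h; apply: ler_wpM2l; first exact: Hp.
by have := entry_le_norm y^T 0 j; rewrite mxE.
Unshelve. all: by end_near.
Qed.

Lemma findim_bound {R : realType} {d} {N : 'cV[R]_d -> R} (T : 'M[R]_d) :
  is_norm N -> exists C : R, 0 <= C /\ forall y, N (T *m y) <= C * N y.
Proof.
move=> hN; have [m [m0 Hm]] := norm_lower _ _ _ hN.
case: (hN) => Hp _ _ _.
set Bt := \sum_(j < d) N (col j T).
have Bt0 : 0 <= Bt by apply: sumr_ge0 => j _; exact: Hp.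
exists (Bt / m); split; first by rewrite divr_ge0 // ltW.
move=> y; apply: le_trans (norm_upper T y (N y / m) hN _) _.
  by move=> j; rewrite ler_pdivlMr // mulrC.
by rewrite mulrA mulrAC.
Qed.

Lemma fwd_add {R : realType} {d} (A : nat -> 'M[R]_d) n i k :
  fwd A n (i + k) = fwd A (n + i) k *m fwd A n i.
Proof.
elim: k => [|k IH]; first by rewrite addn0 mul1mx.
by rewrite addnS /= IH mulmxA addnA.
Qed.

Lemma fwd_unit {R : realType} {d} (A : nat -> 'M[R]_d) n k :
  (forall n, A n \in unitmx) -> fwd A n k \in unitmx.
Proof.
move=> Au; elim: k => [|k IH] /=; first exact: unitmx1.
by rewrite unitmx_mul Au IH.
Qed.

Lemma fwd_comm {R : realType} {d} (A X : nat -> 'M[R]_d) n k :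
  (forall n, X n.+1 *m A n = A n *m X n) ->
  X (n + k)%N *m fwd A n k = fwd A n k *m X n.
Proof.
move=> XA; elim: k => [|k IH] /=; first by rewrite addn0 mul1mx mulmx1.
by rewrite addnS mulmxA XA -mulmxA IH mulmxA.
Qed.

Lemma fwd_conj {R : realType} {d} (A X : nat -> 'M[R]_d) n k :
  (forall n, A n \in unitmx) ->
  (forall n, X n.+1 *m A n = A n *m X n) ->
  X (n + k)%N = fwd A n k *m X n *m invmx (fwd A n k).
Proof.
move=> Au XA; rewrite -(fwd_comm A X n k XA) -mulmxA mulmxV ?mulmx1 //.
exact: fwd_unit.
Qed.

Lemma cocycle_fw {R : realType} {d} (A : nat -> 'M[R]_d) m n :
  (n <= m)%N -> cocycle A m n = fwd A n (m - n).
Proof. by rewrite /cocycle => ->. Qed.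

Lemma cocycle_bw {R : realType} {d} (A : nat -> 'M[R]_d) m n :
  (n <= m)%N -> cocycle A n m = invmx (fwd A n (m - n)).
Proof.
rewrite /cocycle leq_eqVlt => /orP [/eqP ->|nm]; first by rewrite leqnn subnn /= invmx1.
by rewrite leqNgt nm.
Qed.

Lemma expR_neg_le1 {R : realType} (l : R) k : 0 <= l -> expR (- l * k%:R) <= 1.
Proof. by move=> l0; rewrite expR_le1 mulNr oppr_le0 mulr_ge0. Qed.

Lemma mx_ext {R : realType} {d} (M M' : 'M[R]_d) :
  (forall z : 'cV[R]_d, M *m z = M' *m z) -> M = M'.
Proof.
move=> H; apply/matrixP => i j.
have := congr1 (fun v : 'cV[R]_d => v i 0) (H (delta_mx j 0)).
by rewrite -!colE !mxE.
Qed.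

From mathcomp Require Import lra.

Lemma decay0 {R : realType} (t C l : R) : 0 < l ->
  (forall m : nat, t <= C * expR (- l * m%:R)) -> t <= 0.
Proof.
move=> l0 H; rewrite leNgt; apply/negP => t0.
have C0 : 0 < C.
  by have := H 0%N; rewrite mulr0 expR0 mulr1; exact: lt_le_trans.
have x0 : 0 <= C / (t * l) by rewrite divr_ge0 ?mulr_ge0 ?ltW.
have hm := archi_boundP x0.
set m := Num.Def.archi_bound _ in hm.
have := H m; rewrite mulNr expRN ler_pdivlMr ?expR_gt0 // => h1.
have e1 := expR_ge1Dx (l * m%:R).
have h2 : t * (1 + l * m%:R) <= C.
  apply: le_trans h1; apply: ler_wpM2l => //; exact: ltW.
move: hm; rewrite ltr_pdivrMr ?mulr_gt0 // => h3.
have : t * (1 + l * m%:R) = t + m%:R * (t * l).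
  by rewrite mulrDr mulr1 [m%:R * _]mulrC mulrA.
lra.
Qed.

Lemma conj_mul {R : realType} {d} (G X Y : 'M[R]_d) : G \in unitmx ->
  (G *m X *m invmx G) *m (G *m Y *m invmx G) = G *m (X *m Y) *m invmx G.
Proof. by move=> Gu; rewrite -!mulmxA (mulmxA (invmx G)) mulVmx // mul1mx. Qed.

Lemma alg2 {R : realType} {d} (F X Y : 'M[R]_d) : F \in unitmx -> X *m Y = Y ->
  invmx F *m (1%:M - F *m X *m invmx F)
  = (1%:M - X) *m invmx F *m (1%:M - F *m Y *m invmx F).
Proof.
move=> Fu XY.
rewrite !mulmxBr !mulmxBl !mulmx1 !mul1mx !mulmxA !(mulVmx Fu) !mul1mx ?mulmx1.
by rewrite -(mulmxA X (invmx F) F) (mulVmx Fu) mulmx1 XY subrr subr0.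
Qed.

Lemma im_incl {R : realType} {d} (A : nat -> 'M[R]_d) (N : nat -> 'cV[R]_d -> R)
  (X Y : nat -> 'M[R]_d) (K1 l1 K2 l2 : R) :
  (forall n, A n \in unitmx) -> (forall n, is_norm (N n)) ->
  (forall n, X n.+1 *m A n = A n *m X n) -> (forall n, is_proj (Y n)) ->
  0 < K1 -> 0 < l1 -> 0 < K2 -> 0 <= l2 ->
  (forall m x, N 0%N (cocycle A 0 m *m ((1%:M - X m) *m x))
                <= K1 * expR (- l1 * (m - 0)%:R) * N m x) ->
  (forall m x, N m (cocycle A m 0 *m (Y 0%N *m x))
                <= K2 * expR (- l2 * (m - 0)%:R) * N 0%N x) ->
  (opIm (Y 0%N) `<=` opIm (X 0%N))%classic.
Proof.
move=> Au Nn XA Yp K10 l10 K20 l20 HX HY _ [z ->].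
set x := Y 0%N *m z.
have xY : Y 0%N *m x = x by rewrite /x mulmxA Yp.
have Nx0 : 0 <= N 0%N x by case: (Nn 0%N).
have bnd : forall m : nat, N 0%N ((1%:M - X 0%N) *m x)
    <= (K1 * (K2 * N 0%N x)) * expR (- l1 * m%:R).
  move=> m.
  have Gc : (1%:M - X m) *m fwd A 0 m = fwd A 0 m *m (1%:M - X 0%N).
    have := fwd_comm A X 0 m XA; rewrite add0n => h.
    by rewrite mulmxBl mulmxBr mul1mx mulmx1 h.
  have h1 := HX m (fwd A 0 m *m x).
  rewrite (cocycle_bw _ _ _ (leq0n m)) subn0 (mulmxA (1%:M - X m)) Gc -(mulmxA (fwd A 0 m)) mulmxA mulVmx ?fwd_unit // mul1mx in h1.
  have h2 := HY m x; rewrite xY (cocycle_fw _ _ _ (leq0n m)) subn0 in h2.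
  have e1 := expR_neg_le1 l2 m l20.
  have e0 : 0 < expR (- l1 * m%:R) by exact: expR_gt0.
  have h3 : N m (fwd A 0 m *m x) <= K2 * N 0%N x.
    apply: le_trans h2 _; rewrite mulrAC; apply: ler_piMr => //.
    exact: mulr_ge0 (ltW K20) Nx0.
  apply: le_trans h1 _; rewrite mulrAC; apply: ler_wpM2r; first exact: ltW.
  by apply: ler_wpM2l => //; exact: ltW.
have := decay0 _ _ _ l10 bnd.
case: (Nn 0%N) => Hp Hz _ _ hle.
have : (1%:M - X 0%N) *m x = 0 by apply: Hz; apply/eqP; rewrite eq_le hle Hp.
rewrite mulmxBl mul1mx => /eqP; rewrite subr_eq0 => /eqP hx.
by exists x.
Qed.

From mathcomp Require Import ring.

Lemma helper1 {R : realType} (K e D Nx Ny : R) : 0 <= K -> 0 <= e -> 0 <= D ->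
  0 <= Ny -> Nx <= D * Ny -> K * e * Nx <= K * (1 + D) * e * Ny.
Proof.
move=> K0 e0 D0 N0 h.
have Ke : 0 <= K * e by exact: mulr_ge0.
apply: le_trans (ler_wpM2l Ke h) _.
have -> : K * (1 + D) * e * Ny = K * e * (D * Ny) + K * e * Ny by ring.
by rewrite lerDl mulr_ge0.
Qed.

Lemma helper2 {R : realType} (K e D Nz Nw Nm : R) : 0 <= D ->
  Nz <= (1 + D) * Nw -> Nw <= K * e * Nm -> Nz <= K * (1 + D) * e * Nm.
Proof.
move=> D0 h1 h2; apply: le_trans h1 _.
have -> : K * (1 + D) * e * Nm = (1 + D) * (K * e * Nm) by ring.
by apply: ler_wpM2l => //; rewrite addr_ge0.
Qed.

Lemma helper3 {R : realType} (K e D X Nn : R) : 0 <= K -> 0 <= e -> 0 <= D ->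
  0 <= Nn -> X <= K * e * Nn -> X <= K * (1 + D) * e * Nn.
Proof.
move=> K0 e0 D0 N0 h; apply: le_trans h _.
apply: ler_wpM2r => //.
apply: (ler_wpM2r e0).
by apply: ler_peMr => //; rewrite lerDl.
Qed.

Lemma back {R : realType} {d} (A : nat -> 'M[R]_d) (N : nat -> 'cV[R]_d -> R)
    (P P' : nat -> 'M[R]_d) :
  (forall n, A n \in unitmx) ->
  (forall n, is_norm (N n)) ->
  strong_exp_dichotomy A N P ->
  (forall n, is_proj (P' n)) ->
  (forall n, P' n.+1 *m A n = A n *m P' n) ->
  opIm (P 0%N) = opIm (P' 0%N) -> strong_exp_dichotomy A N P'.
Proof.
move=> Au Nn [Pp [PA [K [lam [a [K0 l0 la HD]]]]]] P'p P'A Him.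
have PA' : forall n, P n.+1 *m A n = A n *m P n by move=> n; rewrite PA.
have Ppp : forall n, P n *m P n = P n := Pp.
have P'pp : forall n, P' n *m P' n = P' n := P'p.
have E1 : P' 0%N *m P 0%N = P 0%N.
  apply: mx_ext => z.
  have : opIm (P' 0%N) (P 0%N *m z) by rewrite -Him; exists z.
  by case=> w hw; rewrite -mulmxA hw mulmxA P'pp.
have E2 : P 0%N *m P' 0%N = P' 0%N.
  apply: mx_ext => z.
  have : opIm (P 0%N) (P' 0%N *m z) by rewrite Him; exists z.
  by case=> w hw; rewrite -mulmxA hw mulmxA Ppp.
have Gu : forall n k, fwd A n k \in unitmx by move=> n k; exact: fwd_unit.
have cP : forall n, P n = fwd A 0 n *m P 0%N *m invmx (fwd A 0 n).
  by move=> n; have := fwd_conj A P 0 n Au PA'; rewrite add0n.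
have cP' : forall n, P' n = fwd A 0 n *m P' 0%N *m invmx (fwd A 0 n).
  by move=> n; have := fwd_conj A P' 0 n Au P'A; rewrite add0n.
have En1 : forall n, P' n *m P n = P n.
  by move=> n; rewrite [P' n]cP' [P n]cP conj_mul // E1.
have En2 : forall n, P n *m P' n = P' n.
  by move=> n; rewrite [P' n]cP' [P n]cP conj_mul // E2.
have Nge0 : forall n x, 0 <= N n x by move=> n x; case: (Nn n).
have K0' : 0 <= K by exact: ltW.
have [C [C0 HC]] := findim_bound (P' 0%N) (Nn 0%N).
set D := K + K * C * K.
have D0 : 0 <= D by rewrite addr_ge0 // !mulr_ge0.
have HDn : forall n y, N n (P' n *m y) <= D * N n y.
  move=> n y.
  have -> : P' n *m y = P n *m y + P' n *m ((1%:M - P n) *m y).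
    by rewrite mulmxA mulmxBr mulmx1 En1 mulmxBl addrC subrK.
  have h1 : N n (P n *m y) <= K * N n y.
    case: (HD n n (leqnn n) y) => h _ _ _.
    by rewrite (cocycle_fw _ _ _ (leqnn n)) subnn /= mul1mx mulr0 expR0 mulr1 in h.
  have h2 : N n (P' n *m ((1%:M - P n) *m y)) <= K * C * K * N n y.
    set w := (1%:M - P n) *m y.
    have -> : P' n *m w = fwd A 0 n *m (P 0%N *m P' 0%N) *m invmx (fwd A 0 n) *m w.
      by rewrite E2 [P' n]cP'.
    rewrite -!mulmxA.
    case: (HD n 0%N (leq0n n) (P' 0%N *m (invmx (fwd A 0 n) *m w))) => g1 g2 _ _.
    rewrite (cocycle_fw _ _ _ (leq0n n)) subn0 in g1.
    case: (HD n 0%N (leq0n n) y) => _ g3 _ _.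
    rewrite (cocycle_bw _ _ _ (leq0n n)) subn0 -/w in g3.
    have e1 := expR_neg_le1 lam n (ltW l0).
    have e0 : 0 <= expR (- lam * n%:R) by exact: expR_ge0.
    apply: le_trans g1 _.
    have g4 := HC (invmx (fwd A 0 n) *m w).
    have g5 : N 0%N (invmx (fwd A 0 n) *m w) <= K * N n y.
      apply: le_trans g3 _; rewrite mulrAC [X in _ <= X]mulrC mulrC.
      by apply: ler_piMr => //; rewrite mulr_ge0.
    have g6 : N 0%N (P' 0%N *m (invmx (fwd A 0 n) *m w)) <= C * (K * N n y).
      by apply: le_trans g4 _; apply: ler_wpM2l.
    apply: le_trans (_ : K * N 0%N (P' 0%N *m (invmx (fwd A 0 n) *m w)) <= _).
      rewrite mulrAC; apply: ler_piMr => //; exact: mulr_ge0.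
    by rewrite -!mulrA; apply: ler_wpM2l.
  rewrite /D mulrDl; case: (Nn n) => _ _ _ Ht; apply: le_trans (Ht _ _) _.
  exact: lerD.
split; first exact: P'p.
split; first by move=> n; rewrite P'A.
exists (K * (1 + D)), lam, a; split => //.
  by rewrite mulr_gt0 // ltr_pwDl.
move=> m n nm x.
case: (HD m n nm x) => h1 h2 h3 h4.
have e0 : 0 <= expR (- lam * (m - n)%:R) by exact: expR_ge0.
have ea0 : 0 <= expR (a * (m - n)%:R) by exact: expR_ge0.
split.
- rewrite -(En2 n) -mulmxA.
  case: (HD m n nm (P' n *m x)) => g1 _ _ _; apply: le_trans g1 _.
  by apply: helper1 => //; exact: HDn.
- set F := fwd A n (m - n).
  have Fu : F \in unitmx by exact: Gu.
  have cm : P m = F *m P n *m invmx F.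
    by have := fwd_conj A P n (m - n) Au PA'; rewrite subnKC.
  have cm' : P' m = F *m P' n *m invmx F.
    by have := fwd_conj A P' n (m - n) Au P'A; rewrite subnKC.
  rewrite (cocycle_bw _ _ _ nm) in h2 *.
  have -> : invmx F *m ((1%:M - P' m) *m x)
      = (1%:M - P' n) *m (invmx F *m ((1%:M - P m) *m x)).
    by rewrite [P' m]cm' [P m]cm !mulmxA (alg2 _ _ _ Fu (En1 n)).
  apply: helper2 D0 _ h2.
  rewrite mulmxBl mul1mx mulrDl mul1r.
  by apply: le_trans (normB _ _ (Nn n)) _; apply: lerD => //; exact: HDn.
- by apply: helper3.
- by apply: helper3.
Qed.


Theorem lemma7p2 (R : realType) (d : nat) (A : nat -> 'M[R]_d)
    (N : nat -> 'cV[R]_d -> R) (P P' : nat -> 'M[R]_d) :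
  (forall n, A n \in unitmx) ->
  (forall n, is_norm (N n)) ->
  strong_exp_dichotomy A N P ->
  (forall n, is_proj (P' n)) ->
  (forall n, P' n.+1 *m A n = A n *m P' n) ->
  (strong_exp_dichotomy A N P' <-> opIm (P 0%N) = opIm (P' 0%N)).
Proof.
move=> Au Nn HP P'p P'A; split; last exact: back.
move=> HP'.
case: (HP) => [Pp [PA [K [lam [a [K0 l0 _ HD]]]]]].
case: (HP') => [_ [_ [K' [l' [a' [K'0 l'0 _ HD']]]]]].
have PA' : forall n, P n.+1 *m A n = A n *m P n by move=> n; rewrite PA.
apply/seteqP; split.
- apply: (@im_incl R d A N P' P K' l' K lam Au Nn P'A Pp K'0 l'0 K0 (ltW l0)).
    by move=> m x; case: (HD' m 0%N (leq0n m) x).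
  by move=> m x; case: (HD m 0%N (leq0n m) x).
- apply: (@im_incl R d A N P P' K lam K' l' Au Nn PA' P'p K0 l0 K'0 (ltW l'0)).
    by move=> m x; case: (HD m 0%N (leq0n m) x).
  by move=> m x; case: (HD' m 0%N (leq0n m) x).
Qed.
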